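(* Let $\mathcal{L}_{\rm TM}$ be the Thue–Morse language and let ${\rm S}:\mathcal{L}_{\rm TM}\to\mathbb{N}$ be a homomorphism. Put $p={\rm S}(a)$, $q={\rm S}(b)$. Then $${\rm S}(\mathcal{L}_{\rm TM})=\big(R_{p+q,0}\cup R_{p+q,p}\cup R_{p+q,q}\cup R_{p+q,2p}\cup R_{p+q,2q}\big)\setminus\{0\}.$$
   Context: $\mathbb{N}=\{1,2,3,\dots\}$. Let $\theta$ be the Thue–Morse morphism on $\{a,b\}$, $\theta(a)=ab$, $\theta(b)=ba$. The Thue–Morse language $\mathcal{L}_{\rm TM}$ is the set of all nonempty finite words occurring as factors of $\theta^n(a)$ for some $n\ge0$ (equivalently, of the infinite Thue–Morse word $\theta^\infty(a)=abbabaab\cdots$). A homomorphism ${\rm S}:\mathcal{L}_{\rm TM}\to\mathbb{N}$ is a map with ${\rm S}(w_1\cdots w_n)={\rm S}(w_1)+\cdots+{\rm S}(w_n)$, determined by ${\rm S}(a),{\rm S}(b)\in\mathbb{N}$. For integers $r\ge1$, $s\ge0$, $R_{r,s}=\{s,\ r+s,\ 2r+s,\dots\}=\{rn+s: n\ge0\}$. *)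

(* Defs.v *)
From mathcomp Require Import all_boot.
Set Implicit Arguments. Unset Strict Implicit. Unset Printing Implicit Defensive.

Definition letter := bool.
Definition la : letter := false.
Definition lb : letter := true.

Definition theta (w : seq letter) : seq letter :=
  flatten [seq (if x then [:: lb; la] else [:: la; lb]) | x <- w].

Definition in_LTM (w : seq letter) : Prop :=
  w <> [::] /\ exists n : nat, infix w (iter n theta [:: la]).

Definition Shom (p q : nat) (w : seq letter) : nat :=
  \sum_(x <- w) (if x then q else p).

Definition R_set (r s : nat) (m : nat) : Prop := exists n : nat, m = r * n + s.

(* Main.v *)
Require Import Defs.
From mathcomp Require Import all_boot.
From mathcomp Require Import zify.
Set Implicit Arguments. Unset Strict Implicit.

Lemma theta_nil : theta [::] = [::].
Proof. by []. Qed.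

Lemma theta_cons x s : theta (x :: s) = x :: ~~ x :: theta s.
Proof. by rewrite /theta /=; case: x. Qed.

Lemma theta_cat s1 s2 : theta (s1 ++ s2) = theta s1 ++ theta s2.
Proof. by rewrite /theta map_cat flatten_cat. Qed.

Lemma theta_rcons s y : theta (rcons s y) = theta s ++ [:: y; ~~ y].
Proof. by rewrite -cats1 theta_cat theta_cons. Qed.

Lemma size_theta s : size (theta s) = (size s).*2.
Proof. by elim: s => [|x s IH] //=; rewrite theta_cons /= IH doubleS. Qed.

Lemma Shom_cat p q s1 s2 : Shom p q (s1 ++ s2) = Shom p q s1 + Shom p q s2.
Proof. by rewrite /Shom big_cat. Qed.

Lemma Shom_cons p q x s : Shom p q (x :: s) = (if x then q else p) + Shom p q s.
Proof. by rewrite /Shom big_cons. Qed.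

Lemma Shom_nil p q : Shom p q [::] = 0.
Proof. by rewrite /Shom big_nil. Qed.

Lemma Shom_theta p q s : Shom p q (theta s) = (p + q) * size s.
Proof.
elim: s => [|x s IH]; first by rewrite Shom_nil muln0.
rewrite theta_cons !Shom_cons IH /=; case: x => /=; lia.
Qed.

Lemma Shom_count p q s :
  Shom p q s = p * count_mem false s + q * count_mem true s.
Proof.
elim: s => [|x s IH]; first by rewrite Shom_nil !muln0.
rewrite Shom_cons IH /=; case: x => /=; lia.
Qed.

Definition fac (w : seq letter) := exists k, infix w (iter k theta [:: la]).

Lemma fac_theta w : fac w -> fac (theta w).
Proof.
case=> k /infixP [s1 [s2 E]]; exists k.+1; rewrite iterS E !theta_cat.
exact: infix_infix.
Qed.

Lemma fac_sub w v : fac w -> infix v w -> fac v.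
Proof. by case=> k H1 H2; exists k; apply: infix_trans H2 H1. Qed.

Definition F n x y := exists u, size u = n /\ fac (x :: rcons u y).

Lemma F_theta x u y :
  theta (x :: rcons u y) = [:: x; ~~ x] ++ theta u ++ [:: y; ~~ y].
Proof. by rewrite theta_cons theta_rcons. Qed.

Lemma F1 k x y : F k x y -> F k.*2.+1 x y.
Proof.
case=> u [Hs Hf]; exists (~~ x :: theta u); split.
  by rewrite /= size_theta Hs.
apply: (fac_sub (fac_theta Hf)); rewrite F_theta.
apply/infixP; exists [::], [:: ~~ y]; by rewrite /= -cats1 -catA.
Qed.

Lemma F2 k x y : F k x (~~ y) -> F k.*2.+2 x y.
Proof.
case=> u [Hs Hf]; exists (~~ x :: rcons (theta u) (~~ y)); split.
  by rewrite /= size_rcons size_theta Hs.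
apply: (fac_sub (fac_theta Hf)); rewrite F_theta negbK.
apply/infixP; exists [::], [::]; by rewrite /= cats0 -!cats1 -!catA.
Qed.

Lemma F0 x y : F 0 x y.
Proof.
exists [::]; split => //; exists 3.
by case: x; case: y.
Qed.

Lemma F_all n x y : F n x y.
Proof.
elim: n {-2}n (leqnn n) x y => [|N IH] n Hn x y.
  by rewrite (_ : n = 0); [exact: F0 | lia].
case: n Hn => [|n] Hn; first exact: F0.
have [k [E|E]] : exists k, n = k.*2 \/ n = k.*2.+1.
  exists n./2; have := odd_double_half n; case: (odd n) => /= H; [right|left]; lia.
- subst n; apply: F1; apply: IH; lia.
- subst n; apply: F2; apply: IH; lia.
Qed.

Lemma prefix_bal v i :
  count_mem false (take i (theta v)) <= count_mem true (take i (theta v)) + 1 /\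
  count_mem true (take i (theta v)) <= count_mem false (take i (theta v)) + 1.
Proof.
elim: v i => [|x v IH] i; first by case: i.
rewrite theta_cons; case: i => [|[|i]] /=; first by [].
  by case: x.
have := IH i; case: x => /=; lia.
Qed.

Lemma infix_bal v w : infix w (theta v) ->
  count_mem false w <= count_mem true w + 2 /\
  count_mem true w <= count_mem false w + 2.
Proof.
move/infixP=> [s1 [s2 E]].
have := prefix_bal v (size s1); have := prefix_bal v (size s1 + size w).
have -> : take (size s1) (theta v) = s1 by rewrite E take_size_cat.
have -> : take (size s1 + size w) (theta v) = s1 ++ w.
  by rewrite E catA take_size_cat // size_cat.
rewrite !count_cat; lia.
Qed.

Lemma iter_infix k : exists v, infix (iter k theta [:: la]) (theta v).
Proof.
case: k => [|k]; first by exists [:: la].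
by exists (iter k theta [:: la]); rewrite iterS infix_refl.
Qed.

Lemma cons_neq (x : letter) s : x :: s <> [::].
Proof. by []. Qed.

Theorem theorem7 (p q : nat) (hp : 0 < p) (hq : 0 < q) (m : nat) :
  (exists w, in_LTM w /\ Shom p q w = m) <->
  ((R_set (p + q) 0 m \/ R_set (p + q) p m \/ R_set (p + q) q m
    \/ R_set (p + q) (2 * p) m \/ R_set (p + q) (2 * q) m) /\ m <> 0).
Proof.
split.
- move=> [w [[Hne [k Hk]] <-]].
  have [v Hv] := iter_infix k.
  have [H1 H2] := infix_bal (infix_trans Hk Hv).
  rewrite Shom_count.
  have Hsz : 0 < size w by move: Hne; case: (w).
  have : size w = count_mem false w + count_mem true w.
    by rewrite -[size w](count_predC (pred1 false)) ; congr (_ + _);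
       apply: eq_count => -[].
  set a := count_mem false w; set b := count_mem true w => Hs.
  split; last by nia.
  have [E|[E|[E|[E|E]]]] : a = b \/ a = b + 1 \/ b = a + 1 \/ a = b + 2 \/ b = a + 2
    by lia.
  + by left; exists b; rewrite E; nia.
  + by right; left; exists b; rewrite E; nia.
  + by right; right; left; exists a; rewrite E; nia.
  + by right; right; right; left; exists b; rewrite E; nia.
  + by right; right; right; right; exists a; rewrite E; nia.
- move=> [H Hm0].
  have key : forall x y s1 s2 n,
      (forall u, size u = n -> infix (s1 ++ theta u ++ s2)
                     ([:: x; ~~ x] ++ theta u ++ [:: y; ~~ y])) ->
      (n <> 0 \/ s1 ++ s2 <> [::]) ->
      exists w, in_LTM w /\ Shom p q w = Shom p q (s1 ++ s2) + (p + q) * n.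
    move=> x y s1 s2 n Hin Hne.
    have [u [Hs Hf]] := F_all n x y.
    exists (s1 ++ theta u ++ s2); split; last first.
      by rewrite !Shom_cat Shom_theta Hs; lia.
    split.
      move=> E; have := congr1 size E; rewrite !size_cat size_theta Hs /=.
      case: Hne => Hne; first by lia.
      move=> Hsz; apply: Hne; apply/eqP; rewrite -size_eq0 size_cat; move/eqP: Hsz; rewrite !addn_eq0 => /andP [-> /andP [_ ->]] //.
    change (fac (s1 ++ theta u ++ s2)); apply: (fac_sub (fac_theta Hf)); rewrite F_theta; exact: Hin.
  case: H => [[n E]|[[n E]|[[n E]|[[n E]|[n E]]]]].
  + have Hn : n <> 0 by move=> n0; apply: Hm0; rewrite E n0 muln0.
    have Hi : forall u, size u = n -> infix ([::] ++ theta u ++ [::])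
        ([:: la; ~~ la] ++ theta u ++ [:: la; ~~ la]).
      move=> u _; apply/infixP; exists [:: la; lb], [:: la; lb].
      by rewrite /= cats0.
    have [w [Hw Hs]] := key la la [::] [::] n Hi (or_introl Hn).
    by exists w; split => //; rewrite Hs Shom_nil E; lia.
  + have Hi : forall u, size u = n -> infix ([::] ++ theta u ++ [:: la])
        ([:: la; ~~ la] ++ theta u ++ [:: la; ~~ la]).
      move=> u _; apply/infixP; exists [:: la; lb], [:: lb].
      by rewrite /= -catA.
    have [w [Hw Hs]] := key la la [::] [:: la] n Hi (or_intror (@cons_neq _ _)).
    by exists w; split => //; rewrite Hs E Shom_cons Shom_nil /=; lia.
  + have Hi : forall u, size u = n -> infix ([::] ++ theta u ++ [:: lb])
        ([:: la; ~~ la] ++ theta u ++ [:: lb; ~~ lb]).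
      move=> u _; apply/infixP; exists [:: la; lb], [:: la].
      by rewrite /= -catA.
    have [w [Hw Hs]] := key la lb [::] [:: lb] n Hi (or_intror (@cons_neq _ _)).
    by exists w; split => //; rewrite Hs E Shom_cons Shom_nil /=; lia.
  + have Hi : forall u, size u = n -> infix ([:: la] ++ theta u ++ [:: la])
        ([:: lb; ~~ lb] ++ theta u ++ [:: la; ~~ la]).
      move=> u _; apply/infixP; exists [:: lb], [:: lb].
      by rewrite /= -catA.
    have [w [Hw Hs]] := key lb la [:: la] [:: la] n Hi (or_intror (@cons_neq _ _)).
    by exists w; split => //; rewrite Hs E Shom_cons Shom_cons Shom_nil /=; lia.
  + have Hi : forall u, size u = n -> infix ([:: lb] ++ theta u ++ [:: lb])
        ([:: la; ~~ la] ++ theta u ++ [:: lb; ~~ lb]).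
      move=> u _; apply/infixP; exists [:: la], [:: la].
      by rewrite /= -catA.
    have [w [Hw Hs]] := key la lb [:: lb] [:: lb] n Hi (or_intror (@cons_neq _ _)).
    by exists w; split => //; rewrite Hs E Shom_cons Shom_cons Shom_nil /=; lia.
Qed.
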